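(* Let $\Gamma$ be a group and $\alpha\in\mathrm{End}(\Gamma)$, and let $(\lim\Gamma,\lim\alpha)$ be as in the context. Let $G_\alpha=K_\alpha\rtimes V$ be the fraction group of $(\Gamma,\alpha,\varepsilon_\Gamma)$ and $G_{\lim\alpha}=K_{\lim\alpha}\rtimes V$ that of $(\lim\Gamma,\lim\alpha,\varepsilon_{\lim\Gamma})$, where $\varepsilon$ denotes the trivial endomorphism. Let $\theta_0:\Gamma\to\lim\Gamma$, $g\mapsto[g,0]$, and for each tree $t$ let $\theta_t:\Gamma_t\to(\lim\Gamma)_t$ apply $\theta_0$ coordinatewise. Then the maps $\theta_t$ are compatible with the two directed systems and induce a group isomorphism $\theta:K_\alpha\to K_{\lim\alpha}$, which is $V$-equivariant for the two actions of $V$ and extends uniquely to a group isomorphism $G_\alpha\to G_{\lim\alpha}$.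
   Context: $\lim\Gamma$ is the inductive limit of $\Gamma_n=\{(g,n):g\in\Gamma\}$ ($n\ge0$) with maps $(g,n)\mapsto(\alpha^p(g),n+p)$; $[g,n]$ is the class of $(g,n)$; $\lim\alpha[g,n]=[\alpha(g),n]$ is an automorphism. Fraction groups: Cantor space $\mathfrak C=\{0,1\}^{\mathbf N}$, $C_w=\{w\cdot x\}$ for a word $w$; a tree $t$ is identified with its finite leaf set $L(t)$ of words with $\{C_w\}_{w\in L(t)}$ partitioning $\mathfrak C$; $s\ge t$ if each leaf of $s$ extends a leaf of $t$. $V$: homeomorphisms $v$ with $v(wx)=b(w)x$ for some trees $t,s$ and bijection $b:L(t)\to L(s)$. For a group $\Lambda$ and $\alpha_0,\alpha_1\in\mathrm{End}(\Lambda)$: $\Lambda_t=\Lambda^{L(t)}$, $\iota_{s,t}(g)(wu)=\alpha_{u_k}\circ\cdots\circ\alpha_{u_1}(g(w))$, $K=\varinjlim\Lambda_t$, $v$ sends the class of $g\in\Lambda_t$ to that of $g\circ b^{-1}\in\Lambda_s$, and the fraction group is $K\rtimes V$. *)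

(* Defs.v *)
From Stdlib Require Import ClassicalEpsilon.
From mathcomp Require Import all_boot.

Set Implicit Arguments.
Unset Strict Implicit.
Unset Printing Implicit Defensive.

Record group_ops := GroupOps {
  gcarrier :> Type;
  gmul : gcarrier -> gcarrier -> gcarrier;
  gone : gcarrier;
  ginv : gcarrier -> gcarrier }.
Arguments gone : clear implicits.

Definition is_group (G : group_ops) : Prop :=
  [/\ (forall x y z : G, gmul x (gmul y z) = gmul (gmul x y) z),
      (forall x : G, gmul (gone G) x = x) &
      (forall x : G, gmul (ginv x) x = gone G)].

Definition is_endo (G : group_ops) (f : G -> G) : Prop :=
  forall x y : G, f (gmul x y) = gmul (f x) (f y).

Definition triv_endo (G : group_ops) : G -> G := fun _ => gone G.
Arguments triv_endo : clear implicits.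

Section Quot.
Variables (T : Type) (R : T -> T -> Prop).
Definition quot := {P : T -> Prop | exists x, P = R x}.
Definition cls (x : T) : quot := exist _ (R x) (ex_intro _ x erefl).
Definition repr (q : quot) : T :=
  proj1_sig (constructive_indefinite_description _ (proj2_sig q)).
End Quot.
Arguments cls {T} R x.
Arguments repr {T} R q.

(* The inductive limit  lim Gamma  of  Gamma_n = {(g,n)} along
   (g,n) |-> (alpha^p g, n+p), and  lim alpha [g,n] = [alpha g, n].    *)
Section Lim.
Variables (G : group_ops) (a : G -> G).

Definition lim_rel (x y : G * nat) : Prop :=
  exists p q, x.2 + p = y.2 + q /\ iter p a x.1 = iter q a y.1.
Definition limT := quot lim_rel.
Definition lim_cls (g : G) (n : nat) : limT := cls lim_rel (g, n).
Definition lim_mul (u v : limT) : limT :=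
  let: (g, n) := repr lim_rel u in let: (h, m) := repr lim_rel v in
  lim_cls (gmul (iter m a g) (iter n a h)) (n + m).
Definition lim_one : limT := lim_cls (gone G) 0.
Definition lim_inv (u : limT) : limT :=
  let: (g, n) := repr lim_rel u in lim_cls (ginv g) n.
Definition lim_group : group_ops := GroupOps lim_mul lim_one lim_inv.
Definition lim_endo (u : lim_group) : lim_group :=
  let: (g, n) := repr lim_rel u in lim_cls (a g) n.
Definition theta0 (g : G) : lim_group := lim_cls g 0.
End Lim.
Arguments lim_endo {G} a u.
Arguments theta0 {G} a g.
Arguments lim_group {G} a.

Definition cantor := nat -> bool.
Definition word := seq bool.
Definition in_cyl (w : word) (x : cantor) : bool := w == mkseq x (size w).
Definition wcat (w : word) (x : cantor) : cantor :=
  fun n => if n < size w then nth false w n else x (n - size w).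
(* a finite list of words is (the leaf set of) a tree iff the cylinders
   C_w, w in L, partition the Cantor space *)
Definition is_tree (L : seq word) : Prop :=
  forall x : cantor, count (in_cyl^~ x) L = 1.
Definition tree := {L : seq word | is_tree L}.
Definition leaves (t : tree) : seq word := proj1_sig t.
Definition refines (s t : seq word) : Prop :=
  forall w, w \in s -> exists2 v, v \in t & prefix v w.

(* the complete tree of depth n (used as a common refinement) *)
Definition full (n : nat) : seq word := [seq val u | u <- enum {: n.-tuple bool}].

Lemma full_is_tree n : is_tree (full n).
Proof.
move=> x.
have Hmem w : (w \in full n) = (size w == n).
  apply/idP/idP.
    by case/mapP=> u _ ->; rewrite size_tuple.
  move=> Hw; apply/mapP; exists (@Tuple n bool w Hw) => //.
  by rewrite mem_enum.
have Hu : uniq (full n) by rewrite map_inj_uniq ?enum_uniq //; apply: val_inj.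
rewrite (@eq_in_count _ _ (pred1 (mkseq x n))).
  by have := count_uniq_mem (mkseq x n) Hu; rewrite Hmem size_mkseq eqxx.
by move=> w; rewrite Hmem => /eqP Hw; rewrite /in_cyl Hw.
Qed.

Definition full_tree (n : nat) : tree := exist _ (full n) (full_is_tree n).

Definition maxlen (L : seq word) : nat := foldr (fun w m => maxn (size w) m) 0 L.

(* Thompson's group V (as a predicate on self-maps of Cantor space).   *)
Definition V_rep (f : cantor -> cantor)
    (p : seq word * seq word * (word -> word)) : Prop :=
  let: (t, s, b) := p in
  [/\ is_tree t, is_tree s, perm_eq (map b t) s &
      forall w x, w \in t -> f (wcat w x) = wcat (b w) x].
Definition isV (f : cantor -> cantor) : Prop := exists p, V_rep f p.

Definition Vrep (f : cantor -> cantor) : seq word * seq word * (word -> word) :=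
  match excluded_middle_informative (isV f) with
  | left h => proj1_sig (constructive_indefinite_description _ h)
  | right _ => ([:: [::]], [:: [::]], id)
  end.

Section Frac.
Variables (G : group_ops) (a0 a1 : G -> G).

Definition alpha_word (u : word) (g : G) : G :=
  foldl (fun h (c : bool) => if c then a1 h else a0 h) g u.

Definition leaf_of (L : seq word) (w : word) : word :=
  nth [::] L (find (fun v : word => prefix v w) L).

(* iota_{s,t}(g)(v u) = alpha_{u_k} o ... o alpha_{u_1} (g v), evaluated at
   any leaf w = v u of a refinement s of t *)
Definition iota_tr (t : seq word) (g : word -> G) (w : word) : G :=
  let v := leaf_of t w in alpha_word (drop (size v) w) (g v).

(* representatives of K: an element g of Gamma_t = Gamma^{L(t)} *)
Definition Krep := (tree * (word -> G))%type.
Definition Krel (x y : Krep) : Prop :=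
  exists r, [/\ is_tree r, refines r (leaves x.1), refines r (leaves y.1) &
    forall w, w \in r -> iota_tr (leaves x.1) x.2 w = iota_tr (leaves y.1) y.2 w].
Definition K := quot Krel.
Definition Kcls (t : tree) (g : word -> G) : K := cls Krel (t, g).

Definition Kmul (k l : K) : K :=
  let: (t, g) := repr Krel k in let: (s, h) := repr Krel l in
  Kcls (full_tree (maxn (maxlen (leaves t)) (maxlen (leaves s))))
       (fun w => gmul (iota_tr (leaves t) g w) (iota_tr (leaves s) h w)).
Definition Kone : K := Kcls (full_tree 0) (fun _ => gone G).
Definition Kinv (k : K) : K :=
  let: (t, g) := repr Krel k in Kcls t (fun w => ginv (g w)).

(* action of v in V on K: the class of g in Gamma_t (refined so that t is
   the domain tree of v) goes to the class of g o b^{-1} in Gamma_s *)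
Definition actK (f : cantor -> cantor) (k : K) : K :=
  let: (t, s, b) := Vrep f in
  let: (t', g) := repr Krel k in
  Kcls (full_tree (maxlen s + maxlen (leaves t')))
    (fun w' => let v0 := nth [::] t (find (fun v => prefix (b v) w') t) in
               iota_tr (leaves t') g (v0 ++ drop (size (b v0)) w')).

(* semidirect product K rtimes V, carried by pairs (k, v) with v in V *)
Definition FracT := (K * (cantor -> cantor))%type.
Definition in_frac (x : FracT) : Prop := isV x.2.
Definition frac_mul (x y : FracT) : FracT := (Kmul x.1 (actK x.2 y.1), x.2 \o y.2).
End Frac.

Definition frac_iso (G1 : group_ops) (a b : G1 -> G1) (G2 : group_ops) (c d : G2 -> G2)
    (F : FracT a b -> FracT c d) : Prop :=
  [/\ forall x, in_frac x -> in_frac (F x),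
      forall x y, in_frac x -> in_frac y -> F x = F y -> x = y,
      forall y, in_frac y -> exists2 x, in_frac x & F x = y &
      forall x y, in_frac x -> in_frac y -> F (frac_mul x y) = frac_mul (F x) (F y)].

(* Main.v *)
Require Import Defs.
From Stdlib Require Import ClassicalEpsilon FunctionalExtensionality PropExtensionality ProofIrrelevance.
From mathcomp Require Import all_boot zify.
Set Implicit Arguments.
Unset Strict Implicit.
Unset Printing Implicit Defensive.

Section QuotL.
Variables (T : Type) (R : T -> T -> Prop).
Hypotheses (Rr : forall x, R x x) (Rs : forall x y, R x y -> R y x)
  (Rt : forall x y z, R x y -> R y z -> R x z).

Lemma cls_repr (q : quot R) : cls R (Defs.repr R q) = q.
Proof.
case: q => P h; rewrite /cls /Defs.repr /=.
case: (constructive_indefinite_description _ h) => r /= E.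
subst P; f_equal; exact: proof_irrelevance.
Qed.

Lemma cls_eq x y : R x y -> cls R x = cls R y.
Proof.
move=> Hxy; have E : R x = R y.
  apply: functional_extensionality => z; apply: propositional_extensionality.
  split=> H; [exact: Rt (Rs Hxy) H | exact: Rt Hxy H].
rewrite /cls; move: (ex_intro _ x _) (ex_intro _ y _); rewrite E => p1 p2.
f_equal; exact: proof_irrelevance.
Qed.

Lemma cls_inj x y : cls R x = cls R y -> R x y.
Proof. by move=> /(f_equal (@proj1_sig _ _)) /= ->. Qed.

Lemma repr_cls x : R x (Defs.repr R (cls R x)).
Proof.
apply: cls_inj; by rewrite cls_repr.
Qed.

Lemma cls_surj (q : quot R) : exists x, q = cls R x.
Proof. by exists (Defs.repr R q); rewrite cls_repr. Qed.
End QuotL.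

Lemma maxlen_ge (L : seq word) w : w \in L -> size w <= maxlen L.
Proof.
elim: L => //= a L IH; rewrite in_cons => /orP [/eqP ->|/IH H].
  exact: leq_maxl.
exact: leq_trans H (leq_maxr _ _).
Qed.

Definition zs : cantor := fun _ => false.

Lemma in_cyl_wcat (v w : word) : prefix v w -> in_cyl v (wcat w zs).
Proof.
move=> /prefixP [d ->]; rewrite /in_cyl; apply/eqP.
apply: (@eq_from_nth _ false); first by rewrite size_mkseq.
move=> i Hi; rewrite nth_mkseq // /wcat size_cat.
by rewrite ltn_addr // nth_cat Hi.
Qed.

Lemma leaf_exists (L : seq word) w : is_tree L -> maxlen L <= size w ->
  exists2 v, v \in L & prefix v w.
Proof.
move=> HL Hw; have := HL (wcat w zs).
move=> Hc; have : has (in_cyl^~ (wcat w zs)) L by rewrite has_count Hc.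
case/hasP=> v Hv /eqP Hcyl; exists v => //.
have Hs : size v <= size w := leq_trans (maxlen_ge Hv) Hw.
rewrite prefixE; apply/eqP.
have Hsz : size (take (size v) w) = size v by rewrite size_take_min; apply/minn_idPl.
apply: (@eq_from_nth _ false); first by rewrite Hsz.
move=> i; rewrite Hsz => Hiw.
rewrite nth_take // Hcyl nth_mkseq // /wcat.
by rewrite (leq_trans Hiw Hs).
Qed.

Lemma count_le1_uniq (p : pred word) (L : seq word) v1 v2 :
  count p L <= 1 -> v1 \in L -> v2 \in L -> p v1 -> p v2 -> v1 = v2.
Proof.
elim: L => //= a L IH Hc; rewrite !in_cons.
case/orP=> [/eqP ->|H1]; case/orP=> [/eqP ->|H2] // P1 P2.
- exfalso; move: Hc; rewrite P1 add1n ltnS leqn0 eqn0Ngt -has_count => /negP; apply.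
  by apply/hasP; exists v2.
- exfalso; move: Hc; rewrite P2 add1n ltnS leqn0 eqn0Ngt -has_count => /negP; apply.
  by apply/hasP; exists v1.
- by apply: IH => //; apply: leq_trans Hc; apply: leq_addl.
Qed.

Lemma prefix_total (v1 v2 w : word) : prefix v1 w -> prefix v2 w ->
  prefix v1 v2 \/ prefix v2 v1.
Proof.
move=> H1 H2.
have E1 : take (size v1) w = v1 by apply/eqP; rewrite -prefixE.
have E2 : take (size v2) w = v2 by apply/eqP; rewrite -prefixE.
case: (leqP (size v1) (size v2)) => H.
  by left; rewrite prefixE -{1}E2 -{2}E1 take_takel.
by right; rewrite prefixE -{1}E1 -{2}E2 take_takel // ltnW.
Qed.

Lemma leaf_uniq (L : seq word) v1 v2 w : is_tree L -> v1 \in L -> v2 \in L ->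
  prefix v1 w -> prefix v2 w -> v1 = v2.
Proof.
move=> HL H1 H2 P1 P2.
have [P|P] := prefix_total P1 P2.
- exact: (count_le1_uniq (p := in_cyl^~ (wcat v2 zs)) (eq_leq (HL _)) H1 H2
     (in_cyl_wcat P) (in_cyl_wcat (prefix_refl _))).
- exact: (count_le1_uniq (p := in_cyl^~ (wcat v1 zs)) (eq_leq (HL _)) H1 H2
     (in_cyl_wcat (prefix_refl _)) (in_cyl_wcat P)).
Qed.

Lemma leaf_ofE (L : seq word) v w : is_tree L -> v \in L -> prefix v w ->
  leaf_of L w = v.
Proof.
move=> HL Hv Pv; have Hh : has (fun u : word => prefix u w) L by apply/hasP; exists v.
apply: (leaf_uniq HL _ Hv _ Pv).
  by apply: mem_nth; rewrite -has_find.
exact: (nth_find [::] Hh).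
Qed.

Lemma mem_full n (w : word) : (w \in full n) = (size w == n).
Proof.
apply/idP/idP.
  by case/mapP=> u _ ->; rewrite size_tuple.
move=> Hw; apply/mapP; exists (@Tuple n bool w Hw) => //.
by rewrite mem_enum.
Qed.

Section FracL.
Variables (G : group_ops) (a0 a1 : G -> G).
Local Notation aw := (alpha_word a0 a1).
Local Notation iota := (iota_tr a0 a1).

Lemma aw_cat u1 u2 x : aw (u1 ++ u2) x = aw u2 (aw u1 x).
Proof. by rewrite /alpha_word foldl_cat. Qed.

Lemma iotaE (L : seq word) g v w : is_tree L -> v \in L -> prefix v w ->
  iota L g w = aw (drop (size v) w) (g v).
Proof. by move=> HL Hv Pv; rewrite /iota_tr (leaf_ofE HL Hv Pv). Qed.

Lemma drop_pref (v x y : word) : prefix v x -> prefix x y ->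
  drop (size v) y = drop (size v) x ++ drop (size x) y.
Proof.
move=> H1 H2; case/prefixP: H1 => d Hd; subst x.
case/prefixP: H2 => e He; subst y.
rewrite (drop_size_cat e (erefl (size (v ++ d)))) (drop_size_cat d (erefl (size v))).
by rewrite -catA (drop_size_cat (d ++ e) (erefl (size v))).
Qed.

Lemma iota_ext (L : seq word) g x y : is_tree L -> maxlen L <= size x ->
  prefix x y -> iota L g y = aw (drop (size x) y) (iota L g x).
Proof.
move=> HL Hx Pxy; have [v Hv Pv] := leaf_exists HL Hx.
rewrite (iotaE g HL Hv Pv) (iotaE g HL Hv (prefix_trans Pv Pxy)).
by rewrite (drop_pref Pv Pxy) aw_cat.
Qed.

Lemma iota_full n F w : n <= size w ->
  iota (full n) F w = aw (drop n w) (F (take n w)).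
Proof.
move=> Hn.
have Ht : take n w \in full n by rewrite mem_full size_takel.
by rewrite (iotaE F (full_is_tree n) Ht (prefix_take _ _)) size_takel.
Qed.

Lemma full_refines (L : seq word) n : is_tree L -> maxlen L <= n ->
  refines (full n) L.
Proof.
move=> HL Hn w; rewrite mem_full => /eqP Hw.
by apply: leaf_exists => //; rewrite Hw.
Qed.

Definition agree (x y : Krep G) N :=
  forall w, N <= size w -> iota (leaves x.1) x.2 w = iota (leaves y.1) y.2 w.

Lemma KrelP x y : Krel a0 a1 x y <-> exists N, agree x y N.
Proof.
split.
- case=> r [Hr R1 R2 Hw]; exists (maxlen r) => w Hsz.
  have [u Hu Pu] := leaf_exists Hr Hsz.
  have [v1 Hv1 P1] := R1 u Hu.
  have [v2 Hv2 P2] := R2 u Hu.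
  have T1 : is_tree (leaves x.1) := proj2_sig x.1.
  have T2 : is_tree (leaves y.1) := proj2_sig y.1.
  rewrite (iotaE _ T1 Hv1 (prefix_trans P1 Pu)) (iotaE _ T2 Hv2 (prefix_trans P2 Pu)).
  rewrite (drop_pref P1 Pu) (drop_pref P2 Pu) !aw_cat.
  by rewrite -(iotaE _ T1 Hv1 P1) -(iotaE _ T2 Hv2 P2) Hw.
- case=> N HN.
  set M := maxn N (maxn (maxlen (leaves x.1)) (maxlen (leaves y.1))).
  have T1 : is_tree (leaves x.1) := proj2_sig x.1.
  have T2 : is_tree (leaves y.1) := proj2_sig y.1.
  exists (full M); split.
  + exact: full_is_tree.
  + apply: full_refines => //; rewrite /M; apply: leq_trans (leq_maxr _ _); exact: leq_maxl.
  + apply: full_refines => //; rewrite /M; apply: leq_trans (leq_maxr _ _); exact: leq_maxr.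
  + move=> w; rewrite mem_full => /eqP Hw; apply: HN; rewrite Hw; exact: leq_maxl.
Qed.

Lemma Krel_refl x : Krel a0 a1 x x.
Proof. by apply/KrelP; exists 0. Qed.
Lemma Krel_sym x y : Krel a0 a1 x y -> Krel a0 a1 y x.
Proof. by move/KrelP=> [N H]; apply/KrelP; exists N => w Hw; rewrite H. Qed.
Lemma Krel_trans x y z : Krel a0 a1 x y -> Krel a0 a1 y z -> Krel a0 a1 x z.
Proof.
move/KrelP=> [N1 H1] /KrelP [N2 H2]; apply/KrelP; exists (maxn N1 N2) => w Hw.
rewrite H1 ?H2 //; apply: leq_trans Hw; [exact: leq_maxr | exact: leq_maxl].
Qed.

Lemma KclsE t g t' g' N : agree (t, g) (t', g') N -> Kcls a0 a1 t g = Kcls a0 a1 t' g'.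
Proof.
move=> H; apply: (cls_eq Krel_sym Krel_trans); apply/KrelP; by exists N.
Qed.

Lemma KclsP t g t' g' : Kcls a0 a1 t g = Kcls a0 a1 t' g' ->
  exists N, agree (t, g) (t', g') N.
Proof. by move/(cls_inj Krel_refl)/KrelP. Qed.

Lemma Krepr t g : exists N, agree (t, g) (Defs.repr (Krel a0 a1) (Kcls a0 a1 t g)) N.
Proof. exact/KrelP/(repr_cls Krel_refl). Qed.

Lemma Ksurj (k : K a0 a1) : exists t g, k = Kcls a0 a1 t g.
Proof.
have [[t g] ->] := cls_surj k; by exists t, g.
Qed.

Lemma Kcls_full t g n : maxlen (leaves t) <= n ->
  Kcls a0 a1 (full_tree n) (iota (leaves t) g) = Kcls a0 a1 t g.
Proof.
move=> Hn; apply: (@KclsE _ _ _ _ n) => w Hw /=.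
have Hs : size (take n w) = n by rewrite size_takel.
rewrite iota_full // (@iota_ext _ g (take n w) w (proj2_sig t)) ?Hs //.
exact: prefix_take.
Qed.

End FracL.

Lemma Vrep_ok f : exists h, V_rep h (Vrep f).
Proof.
rewrite /Vrep; case: excluded_middle_informative => [H|_].
  case: (constructive_indefinite_description _ H) => p /= Hp; by exists f.
by exists id; split.
Qed.

Section FracL2.
Variables (G : group_ops) (a0 a1 : G -> G).
Local Notation aw := (alpha_word a0 a1).
Local Notation iota := (iota_tr a0 a1).

Lemma iota_take (L : seq word) g n w : is_tree L -> maxlen L <= n -> n <= size w ->
  aw (drop n w) (iota L g (take n w)) = iota L g w.
Proof.
move=> HL Hn Hw; have Hs : size (take n w) = n by rewrite size_takel.
by rewrite (@iota_ext _ _ _ _ g (take n w) w HL) ?Hs // prefix_take.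
Qed.

Lemma KmulE (Hd : forall u x y, aw u (gmul x y) = gmul (aw u x) (aw u y)) t g s h :
  Kmul (Kcls a0 a1 t g) (Kcls a0 a1 s h) =
  Kcls a0 a1 (full_tree (maxn (maxlen (leaves t)) (maxlen (leaves s))))
    (fun w => gmul (iota (leaves t) g w) (iota (leaves s) h w)).
Proof.
rewrite /Kmul.
have [N1 H1] := Krepr a0 a1 t g; have [N2 H2] := Krepr a0 a1 s h.
move: H1 H2.
case: (Defs.repr _ (Kcls a0 a1 t g)) => t' g' H1.
case: (Defs.repr _ (Kcls a0 a1 s h)) => s' h' H2.
set M' := maxn (maxlen (leaves t')) (maxlen (leaves s')).
set M := maxn (maxlen (leaves t)) (maxlen (leaves s)).
apply: (@KclsE _ _ _ _ _ _ _ (N1 + N2 + M + M')) => w Hw /=.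
have HM : M <= size w by lia.
have HM' : M' <= size w by lia.
have HN1 : N1 <= size w by lia.
have HN2 : N2 <= size w by lia.
rewrite !iota_full // !Hd.
rewrite !iota_take //; try exact: proj2_sig; try exact: leq_maxl; try exact: leq_maxr.
by rewrite H1 // H2.
Qed.

Definition Vpick (t : seq word) (b : word -> word) (w' : word) : word :=
  nth [::] t (find (fun v => prefix (b v) w') t).

Lemma VpickP t s b w' : is_tree s -> perm_eq (map b t) s -> maxlen s <= size w' ->
  [/\ Vpick t b w' \in t, b (Vpick t b w') \in s & prefix (b (Vpick t b w')) w'].
Proof.
move=> Hs Hp Hw; have [u Hu Pu] := leaf_exists Hs Hw.
have : u \in map b t by rewrite (perm_mem Hp).
case/mapP=> v Hv Ev.
have Hh : has (fun v => prefix (b v) w') t by apply/hasP; exists v => //; rewrite -Ev.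
have Hin : Vpick t b w' \in t by apply: mem_nth; rewrite -has_find.
split => //; last exact: (nth_find [::] Hh).
by rewrite -(perm_mem Hp); apply: map_f.
Qed.

Lemma Vpick_ext t s b w' w'' : is_tree s -> perm_eq (map b t) s -> maxlen s <= size w' ->
  prefix w' w'' -> Vpick t b w'' = Vpick t b w'.
Proof.
move=> Hs Hp Hw P.
have [_ Hbs Pb] := VpickP Hs Hp Hw.
rewrite /Vpick (@eq_in_find _ _ (fun v => prefix (b v) w')) //.
move=> v Hv /=; apply/idP/idP => H; last exact: prefix_trans H P.
have Hbv : b v \in s by rewrite -(perm_mem Hp); apply: map_f.
by rewrite (leaf_uniq Hs Hbv Hbs H (prefix_trans Pb P)).
Qed.

Lemma act_red t s b (t1 : tree) g1 n w : is_tree s -> perm_eq (map b t) s ->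
  maxlen s + maxlen (leaves t1) <= n -> n <= size w ->
  iota (full n) (fun w' => let v0 := nth [::] t (find (fun v => prefix (b v) w') t) in
               iota (leaves t1) g1 (v0 ++ drop (size (b v0)) w')) w
  = iota (leaves t1) g1 (Vpick t b w ++ drop (size (b (Vpick t b w))) w).
Proof.
move=> Hs Hp Hn Hw.
have Hsn : maxlen s <= n by apply: leq_trans Hn; apply: leq_addr.
have Htk : size (take n w) = n by rewrite size_takel.
rewrite iota_full //=.
have E : Vpick t b w = Vpick t b (take n w).
  apply: (Vpick_ext Hs Hp) => //; first by rewrite Htk.
  exact: prefix_take.
rewrite -/(Vpick t b (take n w)) -E.
have [_ Hbs Pb] := VpickP Hs Hp (leq_trans Hsn Hw).
have Hsn' : maxlen s <= size (take n w) by rewrite Htk.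
have [_ _ Pb'] := VpickP Hs Hp Hsn'.
rewrite -E in Pb'.
set v := Vpick t b w.
have Hd : drop (size (b v)) w = drop (size (b v)) (take n w) ++ drop n w.
  by rewrite (drop_pref Pb' (prefix_take w n)) Htk.
set x := v ++ drop (size (b v)) (take n w).
have Hbv : size (b v) <= maxlen s := maxlen_ge Hbs.
have Hx : maxlen (leaves t1) <= size x.
  rewrite /x size_cat size_drop Htk.
  apply: leq_trans (leq_addl _ _).
  rewrite leq_subRL; last exact: leq_trans Hbv Hsn.
  apply: leq_trans Hn; rewrite leq_add2r //.
have Pxy : prefix x (v ++ drop (size (b v)) w) by rewrite Hd catA prefix_prefix.
rewrite (@iota_ext G a0 a1 _ g1 _ _ (proj2_sig t1) Hx Pxy).
by rewrite Hd catA drop_size_cat.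
Qed.

End FracL2.

Section FracL3.
Variables (G : group_ops) (a0 a1 : G -> G).
Local Notation aw := (alpha_word a0 a1).
Local Notation iota := (iota_tr a0 a1).

Lemma actKE f t s b (t' : tree) g : Vrep f = (t, s, b) ->
  actK f (Kcls a0 a1 t' g) =
  Kcls a0 a1 (full_tree (maxlen s + maxlen (leaves t')))
    (fun w' => let v0 := nth [::] t (find (fun v => prefix (b v) w') t) in
               iota (leaves t') g (v0 ++ drop (size (b v0)) w')).
Proof.
move=> E; have [hf Hv] := Vrep_ok f; rewrite E in Hv; case: Hv => _ Hs Hp _.
rewrite /actK E.
have [N H] := Krepr a0 a1 t' g; move: H; case: (Defs.repr _ _) => t2 g2 H.
set M1 := maxlen s + maxlen (leaves t2).
set M2 := maxlen s + maxlen (leaves t').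
apply: (@KclsE _ _ _ _ _ _ _ (N + maxlen s + M1 + M2)) => w Hw /=.
rewrite (@act_red G a0 a1 t s b t2 g2 M1 w) //; try lia.
rewrite (@act_red G a0 a1 t s b t' g M2 w) //; try lia.
have [_ Hbs _] := VpickP (w' := w) Hs Hp ltac:(lia).
have Hb := maxlen_ge Hbs.
symmetry; apply: H; rewrite /= size_cat size_drop.
apply: leq_trans (leq_addl _ _); apply: leq_trans (leq_sub2l _ Hb); lia.
Qed.

End FracL3.

Lemma iterC (T : Type) (f : T -> T) a b x : iter a f (iter b f x) = iter b f (iter a f x).
Proof. by rewrite -!iterD addnC. Qed.

Lemma mx_ge (f : word -> nat) (L : seq word) w : w \in L ->
  f w <= foldr (fun w m => maxn (f w) m) 0 L.
Proof.
elim: L => //= a L IH; rewrite in_cons => /orP [/eqP ->|/IH H].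
  exact: leq_maxl.
exact: leq_trans H (leq_maxr _ _).
Qed.

Section AwGen.
Variables (G : group_ops) (a0 a1 : G -> G).
Local Notation aw := (alpha_word a0 a1).

Lemma aw_cons c u x : aw (c :: u) x = aw u (if c then a1 x else a0 x).
Proof. by []. Qed.

Lemma aw_dist : is_endo a0 -> is_endo a1 ->
  forall u x y, aw u (gmul x y) = gmul (aw u x) (aw u y).
Proof.
move=> H0 H1; elim=> //= c u IH x y.
by case: c; rewrite ?H0 ?H1 IH.
Qed.

Lemma aw_one : a0 (gone G) = gone G -> a1 (gone G) = gone G ->
  forall u, aw u (gone G) = gone G.
Proof. by move=> H0 H1; elim=> //= c u IH; case: c; rewrite ?H0 ?H1 IH. Qed.

Lemma aw_eq : (forall y z, a1 y = a1 z) ->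
  forall u y z p, p <= size u -> iter p a0 y = iter p a0 z -> aw u y = aw u z.
Proof.
move=> Hc; elim=> [|c u IH] y z p /=.
  by rewrite leqn0 => /eqP ->.
case: p => [_ /= E|p Hp E]; first by rewrite E.
case: c; first by rewrite (Hc y z).
by apply: (IH _ _ p) => //; rewrite -!iterSr.
Qed.

Lemma iota_const (L : seq word) w : (forall u, aw u (gone G) = gone G) ->
  iota_tr a0 a1 L (fun _ => gone G) w = gone G.
Proof. by move=> H; rewrite /iota_tr H. Qed.

Lemma Kmul_actK_one :
  (forall u x y, aw u (gmul x y) = gmul (aw u x) (aw u y)) ->
  (forall u, aw u (gone G) = gone G) ->
  (forall x, gmul x (gone G) = x) ->
  forall k, Kmul k (actK id (Kone a0 a1)) = k.
Proof.
move=> Hd H1 Hr k.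
case E: (Vrep id) => [[t s] b].
have -> : actK id (Kone a0 a1) = Kcls a0 a1 (full_tree (maxlen s + maxlen (leaves (full_tree 0)))) (fun _ => gone G).
  rewrite /Kone (@actKE G a0 a1 id t s b _ _ E); congr Kcls; apply: functional_extensionality => w' /=.
  exact: iota_const.
have [t' [g ->]] := Ksurj k; rewrite KmulE //.
rewrite -[RHS](@Kcls_full G a0 a1 t' g (maxn (maxlen (leaves t')) (maxlen (leaves (full_tree (maxlen s + maxlen (leaves (full_tree 0)))))))) ?leq_maxl //.
congr Kcls; apply: functional_extensionality => w /=.
by rewrite iota_const // Hr.
Qed.
End AwGen.

Section Main.
Variables (Gam : group_ops) (alpha : Gam -> Gam).
Hypotheses (Hg : is_group Gam) (Ha : is_endo alpha).

Local Notation LG := (lim_group alpha).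
Local Notation th := (theta0 alpha).
Local Notation R := (lim_rel alpha).

Lemma mulgV x : gmul x (ginv x) = gone Gam.
Proof.
case: Hg => A L I.
have e1 : gmul x (ginv x) = gmul (gmul (ginv (ginv x)) (ginv x)) (gmul x (ginv x)).
  by rewrite I L.
rewrite e1 -A. by rewrite [gmul (ginv x) (gmul x (ginv x))]A I L I.
Qed.

Lemma mulg1 x : gmul x (gone Gam) = x.
Proof.
case: Hg => A L I.
have e : gmul x (gone Gam) = gmul x (gmul (ginv x) x) by rewrite I.
by rewrite e [gmul x (gmul _ _)]A mulgV L.
Qed.

Lemma alpha1 : alpha (gone Gam) = gone Gam.
Proof.
case: Hg => A L I.
have E : alpha (gone Gam) = gmul (alpha (gone Gam)) (alpha (gone Gam)).
  by rewrite -Ha L.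
by rewrite -[RHS](I (alpha (gone Gam))) {3}E A I L.
Qed.

Lemma iter_endo k x y : iter k alpha (gmul x y) = gmul (iter k alpha x) (iter k alpha y).
Proof. by elim: k => //= k ->; rewrite Ha. Qed.

Lemma iter_one k : iter k alpha (gone Gam) = gone Gam.
Proof. by elim: k => //= k ->; rewrite alpha1. Qed.

Lemma R_refl x : R x x.
Proof. by exists 0, 0. Qed.
Lemma R_sym x y : R x y -> R y x.
Proof. by case=> p [q [E1 E2]]; exists q, p. Qed.
Lemma R_trans x y z : R x y -> R y z -> R x z.
Proof.
case=> p1 [q1 [E1 F1]] [p2 [q2 [E2 F2]]].
exists (p2 + p1), (q1 + q2); split; first by lia.
by rewrite iterD F1 iterC F2 -iterD.
Qed.

Lemma lim_cls_eq g n h m : R (g, n) (h, m) -> lim_cls alpha g n = lim_cls alpha h m.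
Proof. exact: (cls_eq R_sym R_trans). Qed.

Lemma lim_clsS g n : lim_cls alpha (alpha g) n.+1 = lim_cls alpha g n.
Proof. by apply: lim_cls_eq; exists 0, 1; rewrite addn0 addn1. Qed.

Lemma lim_surj (u : LG) : exists g n, u = lim_cls alpha g n.
Proof. have [[g n] ->] := cls_surj u; by exists g, n. Qed.

Lemma lim_inj0 g h : th g = th h -> exists p, iter p alpha g = iter p alpha h.
Proof.
move/(cls_inj R_refl) => [p [q [/= E F]]].
by exists p; move: E F; rewrite !add0n => ->.
Qed.

Lemma lim_endoE g n : lim_endo alpha (lim_cls alpha g n) = lim_cls alpha (alpha g) n.
Proof.
rewrite /lim_endo.
have := repr_cls R_refl (g, n).
case: (Defs.repr _ _) => g' n' [p [q [/= E F]]].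
apply: lim_cls_eq; exists q, p; split => /=; first by lia.
by rewrite -iterSr iterS -F -iterS iterSr.
Qed.

Lemma lim_mulE g n h m : lim_mul (lim_cls alpha g n) (lim_cls alpha h m) =
  lim_cls alpha (gmul (iter m alpha g) (iter n alpha h)) (n + m).
Proof.
rewrite /lim_mul.
have := repr_cls R_refl (g, n); have := repr_cls R_refl (h, m).
rewrite /lim_cls.
case: (Defs.repr R (cls R (h, m))) => h' m' [p2 [q2 [/= E2 F2]]].
case: (Defs.repr R (cls R (g, n))) => g' n' [p1 [q1 [/= E1 F1]]].
apply: lim_cls_eq; exists (q1 + q2), (p1 + p2); split => /=; first by lia.
rewrite !iter_endo -!iterD; congr gmul.
  rewrite (_ : p1 + p2 + m = (p2 + m) + p1); last by lia.
  rewrite [in RHS]iterD F1 -iterD; congr iter; lia.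
rewrite (_ : p1 + p2 + n = (p1 + n) + p2); last by lia.
rewrite [in RHS]iterD F2 -iterD; congr iter; lia.
Qed.

Lemma lim_endo_endo : is_endo (lim_endo alpha).
Proof.
move=> u v; have [g [n ->]] := lim_surj u; have [h [m ->]] := lim_surj v.
rewrite /gmul /= lim_mulE !lim_endoE lim_mulE Ha.
by rewrite -!iterSr !iterS.
Qed.

Lemma lim_triv_endo : is_endo (triv_endo LG).
Proof.
move=> u v; rewrite /triv_endo /gone /= /lim_one lim_mulE /=.
by case: Hg => _ L _; rewrite L.
Qed.

Lemma lim_mul1 (u : LG) : gmul u (gone LG) = u.
Proof.
have [g [n ->]] := lim_surj u.
by rewrite /gmul /gone /= /lim_one lim_mulE /= iter_one mulg1 addn0.
Qed.

Lemma lim_endo1 : lim_endo alpha (gone LG) = gone LG.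
Proof. by rewrite /gone /= /lim_one lim_endoE alpha1. Qed.

Lemma triv_endo_endo : is_endo (triv_endo Gam).
Proof. by move=> x y; rewrite /triv_endo; case: Hg => _ L _; rewrite L. Qed.

Lemma theta_aw u x : th (alpha_word alpha (triv_endo Gam) u x) =
  alpha_word (lim_endo alpha) (triv_endo LG) u (th x).
Proof.
elim: u x => //= c u IH x; case: c; rewrite IH //.
by rewrite /theta0 lim_endoE.
Qed.

Lemma compat (L : seq word) g w :
  th (iota_tr alpha (triv_endo Gam) L g w) =
  iota_tr (lim_endo alpha) (triv_endo LG) L (fun v => th (g v)) w.
Proof. exact: theta_aw. Qed.


Local Notation KA := (K alpha (triv_endo Gam)).
Local Notation KL := (K (lim_endo alpha) (triv_endo LG)).
Local Notation iotaA := (iota_tr alpha (triv_endo Gam)).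
Local Notation iotaL := (iota_tr (lim_endo alpha) (triv_endo LG)).

Definition thetaK (k : KA) : KL :=
  let x := Defs.repr (Krel alpha (triv_endo Gam)) k in
  Kcls (lim_endo alpha) (triv_endo LG) x.1 (fun v => th (x.2 v)).

Lemma theta_cls t g : thetaK (Kcls alpha (triv_endo Gam) t g) =
  Kcls (lim_endo alpha) (triv_endo LG) t (fun v => th (g v)).
Proof.
rewrite /thetaK.
have [N H] := Krepr alpha (triv_endo Gam) t g; move: H.
case: (Defs.repr _ _) => t' g' H /=.
apply: (@KclsE _ _ _ _ _ _ _ N) => w Hw /=.
by rewrite -!compat H.
Qed.

Lemma theta_inj k1 k2 : thetaK k1 = thetaK k2 -> k1 = k2.
Proof.
have [t1 [g1 ->]] := Ksurj k1; have [t2 [g2 ->]] := Ksurj k2.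
rewrite !theta_cls => /KclsP [N HN].
have HT (w : word) : N <= size w -> th (iotaA (leaves t1) g1 w) = th (iotaA (leaves t2) g2 w).
  by move=> Hw; rewrite !compat; apply: HN.
set N' := maxn N (maxn (maxlen (leaves t1)) (maxlen (leaves t2))).
pose pf (w : word) := epsilon (inhabits 0)
   (fun p => iter p alpha (iotaA (leaves t1) g1 w) = iter p alpha (iotaA (leaves t2) g2 w)).
set P := foldr (fun w m => maxn (pf w) m) 0 (full N').
apply: (@KclsE _ _ _ _ _ _ _ (N' + P)) => x Hx /=.
have HN' : N' <= size x by lia.
have Ht1 : maxlen (leaves t1) <= N' by rewrite /N'; lia.
have Ht2 : maxlen (leaves t2) <= N' by rewrite /N'; lia.
rewrite -(@iota_take _ alpha (triv_endo Gam) _ g1 N' x (proj2_sig t1) Ht1 HN').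
rewrite -(@iota_take _ alpha (triv_endo Gam) _ g2 N' x (proj2_sig t2) Ht2 HN').
have Hw : take N' x \in full N' by rewrite mem_full size_takel.
have Hp : pf (take N' x) <= P := mx_ge pf Hw.
apply: (@aw_eq Gam alpha (triv_endo Gam) (fun _ _ => erefl) _ _ _ (pf (take N' x))).
  by rewrite size_drop; lia.
have Hex : exists p, iter p alpha (iotaA (leaves t1) g1 (take N' x)) =
                    iter p alpha (iotaA (leaves t2) g2 (take N' x)).
  apply: lim_inj0; apply: HT; rewrite size_takel //; rewrite /N'; lia.
exact: (epsilon_spec (inhabits 0) _ Hex).
Qed.

Lemma lim_aw u g n : n <= size u ->
  exists y, alpha_word (lim_endo alpha) (triv_endo LG) u (lim_cls alpha g n) = th y.
Proof.
elim: u g n => [|c u IH] g n /=.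
  by rewrite leqn0 => /eqP ->; exists g.
move=> Hn; case: c.
  exact: (IH (gone Gam) 0).
rewrite lim_endoE; case: n Hn => [|n] Hn.
  exact: (IH (alpha g) 0).
rewrite lim_clsS; exact: IH.
Qed.

Lemma theta_surj k' : exists k, thetaK k = k'.
Proof.
have [t [h ->]] := Ksurj k'.
pose nv (v : word) := (Defs.repr R (h v)).2.
pose gv (v : word) := (Defs.repr R (h v)).1.
have Hh v : h v = lim_cls alpha (gv v) (nv v).
  rewrite /gv /nv /lim_cls; case E: (Defs.repr R (h v)) => [a b] /=.
  by rewrite -E cls_repr.
set Nm := foldr (fun w m => maxn (nv w) m) 0 (leaves t).
set M := maxlen (leaves t) + Nm.
have Hex (x : word) : M <= size x -> exists y, th y = iotaL (leaves t) h x.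
  move=> Hx; have [v Hv Pv] := leaf_exists (proj2_sig t) (leq_trans (leq_addr _ _) Hx).
  rewrite (@iotaE _ (lim_endo alpha) (triv_endo LG) _ h _ _ (proj2_sig t) Hv Pv) Hh.
  have Hvl : size v <= maxlen (leaves t) := maxlen_ge Hv.
  have Hnv : nv v <= Nm := mx_ge nv Hv.
  have Hx' : maxlen (leaves t) + Nm <= size x := Hx.
  have [y Ey] := @lim_aw (drop (size v) x) (gv v) (nv v) ltac:(rewrite size_drop; lia).
  by exists y.
pose Gp (x : word) := epsilon (inhabits (gone Gam)) (fun y => th y = iotaL (leaves t) h x).
exists (Kcls alpha (triv_endo Gam) (full_tree M) Gp).
rewrite theta_cls; apply: (@KclsE _ _ _ _ _ _ _ M) => w Hw /=.
rewrite iota_full //.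
have Ew : th (Gp (take M w)) = iotaL (leaves t) h (take M w).
  have Hx : M <= size (take M w) by rewrite size_takel.
  exact: (epsilon_spec (inhabits (gone Gam)) _ (Hex _ Hx)).
rewrite Ew iota_take //; first exact: proj2_sig.
exact: leq_addr.
Qed.

Lemma theta_bij : bijective thetaK.
Proof.
pose inv (y : KL) := epsilon (inhabits (Kone alpha (triv_endo Gam))) (fun x => thetaK x = y).
have Hi y : thetaK (inv y) = y.
  exact: (epsilon_spec (inhabits (Kone alpha (triv_endo Gam))) _ (theta_surj y)).
exists inv => [x|y]; last exact: Hi.
by apply: theta_inj; rewrite Hi.
Qed.

Lemma theta_mul k l : thetaK (Kmul k l) = Kmul (thetaK k) (thetaK l).
Proof.
have [t [g ->]] := Ksurj k; have [s [h ->]] := Ksurj l.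
rewrite KmulE; last exact: aw_dist Ha triv_endo_endo.
rewrite !theta_cls KmulE; last exact: aw_dist lim_endo_endo lim_triv_endo.
congr Kcls; apply: functional_extensionality => w /=.
by rewrite -!compat /theta0 /gmul /= lim_mulE.
Qed.

Lemma theta_act f k : thetaK (actK f k) = actK f (thetaK k).
Proof.
have [t' [g ->]] := Ksurj k.
case E: (Vrep f) => [[t s] b].
rewrite (@actKE _ _ _ f t s b t' g E) !theta_cls (@actKE _ _ _ f t s b t' _ E).
congr Kcls; apply: functional_extensionality => w /=.
exact: compat.
Qed.


Lemma isV_id : isV id.
Proof. by exists ([:: [::]], [:: [::]], id); split. Qed.

Lemma main_aux :
  (forall t s : seq word, is_tree t -> is_tree s -> refines s t ->
     forall (g : word -> Gam) w, w \in s ->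
       theta0 alpha (iota_tr alpha (triv_endo Gam) t g w) =
       iota_tr (lim_endo alpha) (triv_endo (lim_group alpha)) t
               (fun v => theta0 alpha (g v)) w) /\
  exists theta : K alpha (triv_endo Gam) ->
                 K (lim_endo alpha) (triv_endo (lim_group alpha)),
    [/\
        forall (t : tree) (g : word -> Gam),
          theta (Kcls alpha (triv_endo Gam) t g) =
          Kcls (lim_endo alpha) (triv_endo (lim_group alpha)) t
               (fun v => theta0 alpha (g v)),
        bijective theta,
        forall k l, theta (Kmul k l) = Kmul (theta k) (theta l),
        forall f k, isV f -> theta (actK f k) = actK f (theta k) &
        exists Phi : FracT alpha (triv_endo Gam) ->
                     FracT (lim_endo alpha) (triv_endo (lim_group alpha)),
          [/\ frac_iso Phi,
              forall k, Phi (k, id) = (theta k, id),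
              forall f, isV f -> Phi (Kone alpha (triv_endo Gam), f) =
                                 (Kone (lim_endo alpha) (triv_endo (lim_group alpha)), f) &
              forall Psi : FracT alpha (triv_endo Gam) ->
                           FracT (lim_endo alpha) (triv_endo (lim_group alpha)),
                frac_iso Psi ->
                (forall k, Psi (k, id) = (theta k, id)) ->
                (forall f, isV f -> Psi (Kone alpha (triv_endo Gam), f) =
                                   (Kone (lim_endo alpha) (triv_endo (lim_group alpha)), f)) ->
                forall x, in_frac x -> Psi x = Phi x]].
Proof.
split.
  by move=> t s _ _ _ g w _; exact: compat.
have HA : forall k, Kmul k (actK id (Kone alpha (triv_endo Gam))) = k.
  apply: Kmul_actK_one.
  - exact: aw_dist Ha triv_endo_endo.
  - exact: aw_one alpha1 erefl.
  - exact: mulg1.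
have HL : forall k, Kmul k (actK id (Kone (lim_endo alpha) (triv_endo (lim_group alpha)))) = k.
  apply: Kmul_actK_one.
  - exact: aw_dist lim_endo_endo lim_triv_endo.
  - exact: aw_one lim_endo1 erefl.
  - exact: lim_mul1.
exists (thetaK); split.
- by move=> t g; exact: theta_cls.
- exact: theta_bij.
- exact: theta_mul.
- by move=> f k _; exact: theta_act.
exists (fun x => (thetaK x.1, x.2)); split.
- split.
  + by move=> x.
  + move=> [k1 f1] [k2 f2] _ _ E.
    have E1 : thetaK k1 = thetaK k2 := f_equal fst E.
    have E2 : f1 = f2 := f_equal snd E.
    by rewrite (theta_inj E1) E2.
  + move=> [k f] Hf; have [k0 Ek] := theta_surj k.
    by exists (k0, f) => //; rewrite /= Ek.
  + move=> [k1 f1] [k2 f2] H1 _.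
    by rewrite /frac_mul /= theta_mul // theta_act.
- by [].
- by move=> f _; rewrite /= /Kone theta_cls.
- move=> Psi [_ _ _ Hm] H1 H2 [k f] Hf.
  have Hdec : (k, f) = frac_mul (k, id) (Kone alpha (triv_endo Gam), f).
    by rewrite /frac_mul /= HA.
  rewrite Hdec Hm //; last exact: isV_id.
  by rewrite H1 H2 // /frac_mul /= HA HL.
Qed.

End Main.

Theorem mainTheorem5 (Gam : group_ops) (alpha : Gam -> Gam) :
  is_group Gam -> is_endo alpha ->
  (* the theta_t are compatible with the directed systems *)
  (forall t s : seq word, is_tree t -> is_tree s -> refines s t ->
     forall (g : word -> Gam) w, w \in s ->
       theta0 alpha (iota_tr alpha (triv_endo Gam) t g w) =
       iota_tr (lim_endo alpha) (triv_endo (lim_group alpha)) t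
               (fun v => theta0 alpha (g v)) w) /\
  exists theta : K alpha (triv_endo Gam) ->
                 K (lim_endo alpha) (triv_endo (lim_group alpha)),
    [/\ (* theta is induced by the theta_t *)
        forall (t : tree) (g : word -> Gam),
          theta (Kcls alpha (triv_endo Gam) t g) =
          Kcls (lim_endo alpha) (triv_endo (lim_group alpha)) t
               (fun v => theta0 alpha (g v)),
        (* group isomorphism *)
        bijective theta,
        forall k l, theta (Kmul k l) = Kmul (theta k) (theta l),
        (* V-equivariance *)
        forall f k, isV f -> theta (actK f k) = actK f (theta k) &
        (* unique extension to an isomorphism of the fraction groups *)
        exists Phi : FracT alpha (triv_endo Gam) ->
                     FracT (lim_endo alpha) (triv_endo (lim_group alpha)),
          [/\ frac_iso Phi,
              forall k, Phi (k, id) = (theta k, id),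
              forall f, isV f -> Phi (Kone alpha (triv_endo Gam), f) =
                                 (Kone (lim_endo alpha) (triv_endo (lim_group alpha)), f) &
              forall Psi : FracT alpha (triv_endo Gam) ->
                           FracT (lim_endo alpha) (triv_endo (lim_group alpha)),
                frac_iso Psi ->
                (forall k, Psi (k, id) = (theta k, id)) ->
                (forall f, isV f -> Psi (Kone alpha (triv_endo Gam), f) =
                                   (Kone (lim_endo alpha) (triv_endo (lim_group alpha)), f)) ->
                forall x, in_frac x -> Psi x = Phi x]].
Proof. move=> Hg Ha; exact: main_aux. Qed.
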